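(* Let $(X,d,\kappa)$ be a digital metric space, where $d$ is any $\ell_p$ metric, and let $f,g: X \to X$. Then $f$ is $g$-intimate if and only if for every sequence $\{x_n\}_{n=1}^\infty \subset X$ such that $\lim_{n\to\infty} f(x_n) = \lim_{n\to\infty} g(x_n) = t$ for some $t \in X$, we have, for $n$ sufficiently large, $d(g(t),t) \le d(f(t),t)$.
   Context: A digital metric space is a triple $(X,d,\kappa)$ with $X\subset\mathbb{Z}^n$, $\kappa$ an adjacency relation on $X$, and $d$ a metric on $X$. The $\ell_p$ metric ($1\le p\le\infty$) is $d(x,y) = (\sum_i |x_i-y_i|^p)^{1/p}$ for $p<\infty$ and $\max_i|x_i-y_i|$ for $p=\infty$. Limits are taken with respect to $d$. Let $\alpha$ denote either the $\liminf_{n\to\infty}$ or the $\limsup_{n\to\infty}$ operation. For $f,g: X\to X$, $f$ is $g$-intimate if for every sequence $\{x_n\} \subset X$ with $\lim_{n\to\infty} f(x_n) = \lim_{n\to\infty} g(x_n) = t$ for some $t\in X$ we have (in the paper's wording, ''for $n$ sufficiently large'') $\alpha\, d(g(f(x_n)), g(x_n)) \le \alpha\, d(f(f(x_n)), f(x_n))$. *)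

(* Defs.v *)
From HB Require Import structures.
From mathcomp Require Import all_boot all_order all_algebra.
From mathcomp Require Import all_classical all_reals all_analysis.
Set Implicit Arguments. Unset Strict Implicit. Unset Printing Implicit Defensive.
Import Order.TTheory GRing.Theory Num.Theory.
Local Open Scope ring_scope.
Local Open Scope classical_set_scope.

Definition lp_dist (R : realType) (n : nat) (p : \bar R)
    (x y : 'rV[int]_n) : R :=
  match p with
  | EFin r => (\sum_(i < n) (`|((x ord0 i - y ord0 i)%:~R : R)| `^ r)) `^ r^-1
  | _ => \big[Num.max/0]_(i < n) `|((x ord0 i - y ord0 i)%:~R : R)|
  end.

Definition dconv (R : realType) (P : Type) (d : P -> P -> R)
    (u : nat -> P) (t : P) : Prop :=
  forall e : R, 0 < e -> exists N : nat, forall m : nat, (N <= m)%N -> d (u m) t < e.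

Definition alpha_op (R : realType) (alpha : bool) (u : nat -> \bar R) : \bar R :=
  if alpha then limn_esup u else limn_einf u.

Definition intimate (R : realType) (P : Type) (alpha : bool) (d : P -> P -> R)
    (X : set P) (f g : P -> P) : Prop :=
  forall (x : nat -> P) (t : P),
    (forall m, X (x m)) -> X t ->
    dconv d (fun m => f (x m)) t -> dconv d (fun m => g (x m)) t ->
    (alpha_op alpha (fun m => (d (g (f (x m))) (g (x m)))%:E)
       <= alpha_op alpha (fun m => (d (f (f (x m))) (f (x m)))%:E))%E.

(* Main.v *)
Require Import Defs.
From HB Require Import structures.
From mathcomp Require Import all_boot all_order all_algebra.
From mathcomp Require Import all_classical all_reals all_analysis.
Import Order.TTheory GRing.Theory Num.Theory.
Local Open Scope ring_scope.
Local Open Scope classical_set_scope.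

Lemma alpha_ev (R : realType) (alpha : bool) (u : nat -> \bar R) (c : \bar R) (N : nat) :
  (forall m, (N <= m)%N -> u m = c) -> alpha_op alpha u = c.
Proof.
move=> H.
have hc : u @ \oo --> c.
  apply: cvg_near_cst; by exists N.
have [h1 h2] := cvg_limn_einf_sup hc; by case: alpha.
Qed.

Lemma int_norm_ge1 (R : realType) (z : int) : z != 0 -> 1 <= `|(z%:~R : R)|.
Proof.
move=> hz. rewrite -intr_norm. rewrite (_ : 1 = 1%:~R) // ler_int.
by rewrite -normr_gt0 in hz.
Qed.

Lemma big_max_ge (R : realType) (I : eqType) (s : seq I) (F : I -> R) i :
  i \in s -> F i <= \big[Num.max/0]_(j <- s) F j.
Proof.
elim: s => [//|a s IH]; rewrite inE big_cons => /orP[/eqP->|/IH h].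
  by rewrite le_max lexx.
by rewrite le_max h orbT.
Qed.

Lemma powR_ge1' (R : realType) (a r : R) : 1 <= a -> 0 <= r -> 1 <= a `^ r.
Proof. move=> ha hr; have := ler_powR ha hr; by rewrite powRr0. Qed.

Lemma lp_ge1 (R : realType) n (p : \bar R) (hp : (1 <= p)%E) (x y : 'rV[int]_n) :
  x != y -> 1 <= lp_dist p x y.
Proof.
move=> hxy.
have [i hi] : exists i, x ord0 i != y ord0 i.
  apply/existsP; move: hxy; apply: contraR; rewrite negb_exists => /forallP h.
  apply/eqP/matrixP => a b; rewrite (ord1 a); exact/eqP/negPn/h.
have h1 : 1 <= `|((x ord0 i - y ord0 i)%:~R : R)| by apply: int_norm_ge1; rewrite subr_eq0.
case: p hp => [r hr| |] /=.
- have r0 : 0 < r by move: hr; rewrite lee_fin => /(lt_le_trans ltr01).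
  have hS : 1 <= \sum_(i0 < n) `|((x ord0 i0 - y ord0 i0)%:~R : R)| `^ r.
    rewrite (bigD1 i) //=.
    apply: le_trans (_ : _ <= `|((x ord0 i - y ord0 i)%:~R : R)| `^ r) _.
      exact: powR_ge1' (ltW r0).
    rewrite lerDl; apply: sumr_ge0 => j _; exact: powR_ge0.
  by apply: powR_ge1' => //; rewrite invr_ge0 ltW.
- move=> _; apply: le_trans h1 _; have := @big_max_ge _ _ _ (fun j => `|((x ord0 j - y ord0 j)%:~R : R)|) i (mem_index_enum i). exact.
- move=> _; apply: le_trans h1 _; have := @big_max_ge _ _ _ (fun j => `|((x ord0 j - y ord0 j)%:~R : R)|) i (mem_index_enum i). exact.
Qed.

Lemma dconv_ev (R : realType) n (p : \bar R) (hp : (1 <= p)%E) (u : nat -> 'rV[int]_n) t :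
  dconv (lp_dist p) u t -> exists N, forall m, (N <= m)%N -> u m = t.
Proof.
move=> /(_ 1 ltr01) [N HN]; exists N => m /HN h.
apply/eqP; apply: contraLR h => /(@lp_ge1 _ _ _ hp _ _); by rewrite -leNgt.
Qed.

Theorem mainTheorem10 (R : realType) (n : nat) (X : set 'rV[int]_n)
    (kappa : rel 'rV[int]_n) (p : \bar R) (hp : (1 <= p)%E)
    (alpha : bool) (f g : 'rV[int]_n -> 'rV[int]_n)
    (hf : forall x, X x -> X (f x)) (hg : forall x, X x -> X (g x)) :
  intimate alpha (lp_dist p) X f g <->
  (forall (x : nat -> 'rV[int]_n) (t : 'rV[int]_n),
     (forall m, X (x m)) -> X t ->
     dconv (lp_dist p) (fun m => f (x m)) t ->
     dconv (lp_dist p) (fun m => g (x m)) t ->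
     lp_dist p (g t) t <= lp_dist p (f t) t).
Proof.
have key : forall (x : nat -> 'rV[int]_n) t,
    dconv (lp_dist p) (fun m => f (x m)) t ->
    dconv (lp_dist p) (fun m => g (x m)) t ->
    (alpha_op alpha (fun m => (lp_dist p (g (f (x m))) (g (x m)))%:E) = (lp_dist p (g t) t)%:E) /\
    (alpha_op alpha (fun m => (lp_dist p (f (f (x m))) (f (x m)))%:E) = (lp_dist p (f t) t)%:E).
  move=> x t /(@dconv_ev _ _ _ hp _ _) [N1 H1] /(@dconv_ev _ _ _ hp _ _) [N2 H2]; split.
    apply: (@alpha_ev _ _ _ _ (maxn N1 N2)) => m; rewrite geq_max => /andP[a b].
    by rewrite H1 // H2.
  apply: (@alpha_ev _ _ _ _ (maxn N1 N2)) => m; rewrite geq_max => /andP[a b].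
  by rewrite H1.
split.
- move=> Hint x t Xx Xt cf cg; have := Hint x t Xx Xt cf cg.
  have [-> ->] := key x t cf cg; by rewrite lee_fin.
- move=> H x t Xx Xt cf cg; have [-> ->] := key x t cf cg; rewrite lee_fin; exact: H.
Qed.
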